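(* For every natural number $n\geq 2$, the $n$-Split Interval $S_n(I)$ is a compact Hausdorff space.
   Context: Let $I=[0,1]$. For $n\geq 2$, $S_n(I)$ is the set $I\times\{0,\ldots,n-1\}$ with the topology in which the points $(x,i)$ with $i\in\{2,\ldots,n-1\}$ are isolated, a point $(x,0)$ with $x>0$ has basic neighbourhoods $\{(x,0)\}\cup\{(y,i): z_0<y<x,\ i\in\{0,\ldots,n-1\}\}$ for $z_0\in I$, $z_0<x$, a point $(x,1)$ with $x<1$ has basic neighbourhoods $\{(x,1)\}\cup\{(y,i): x<y<z_1,\ i\in\{0,\ldots,n-1\}\}$ for $z_1\in I$, $z_1>x$, and the points $(0,0)$ and $(1,1)$ are isolated. *)

(* Defs.v *)
From HB Require Import structures.
From mathcomp Require Import all_boot all_order all_algebra.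
From mathcomp Require Import all_classical all_reals.
From mathcomp Require Import topology.
Set Implicit Arguments. Unset Strict Implicit. Unset Printing Implicit Defensive.
Import Order.TTheory GRing.Theory Num.Theory.
Local Open Scope classical_set_scope.
Local Open Scope ring_scope.

Definition unitI (R : realType) : Type := {x : R | 0 <= x <= 1}.

Definition splitI (R : realType) (n : nat) : Type := (unitI R * 'I_n)%type.
HB.instance Definition _ (R : realType) (n : nat) := Choice.on (splitI R n).

Definition split_basic (R : realType) (n : nat) (U : set (splitI R n)) : Prop :=
  exists (x : unitI R) (i : 'I_n),
       ((2 <= val i)%N /\ U = [set (x, i)])
    \/ (val i = 0%N /\ val x = 0 /\ U = [set (x, i)])
    \/ (val i = 0%N /\ 0 < val x /\
         exists z0 : unitI R, val z0 < val x /\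
           U = [set (x, i)] `|` [set q | val z0 < val q.1 < val x])
    \/ (val i = 1%N /\ val x = 1 /\ U = [set (x, i)])
    \/ (val i = 1%N /\ val x < 1 /\
         exists z1 : unitI R, val x < val z1 /\
           U = [set (x, i)] `|` [set q | val x < val q.1 < val z1]).

HB.instance Definition _ (R : realType) (n : nat) :=
  isSubBaseTopological.Build (splitI R n) (@split_basic R n) id.

(* Main.v *)
Require Import Defs.
From HB Require Import structures.
From mathcomp Require Import all_boot all_order all_algebra.
From mathcomp Require Import all_classical all_reals.
From mathcomp Require Import topology normedtype.
Set Implicit Arguments. Unset Strict Implicit. Unset Printing Implicit Defensive.
Import Order.TTheory GRing.Theory Num.Theory.
Local Open Scope classical_set_scope.
Local Open Scope ring_scope.

Definition side (R : realType) (n : nat) (p : splitI R n) : set (splitI R n) :=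
  if val p.2 == 0%N then [set q : splitI R n | val q.1 < val p.1]
  else if val p.2 == 1%N then [set q : splitI R n | val p.1 < val q.1] else set0.

Lemma small (R : realType) (n : nat) (p : splitI R n) (a b : R) :
  a < val p.1 < b -> exists B : set (splitI R n),
  [/\ split_basic B, B p, B `<=` [set q | a < val q.1 < b] &
      B `<=` [set p] `|` side p].
Proof.
case: p => [[x hx] [[|[|k]] hk]] /= /andP[ax xb]; have /andP[x0 x1] := hx.
-
  have [xz|xpos] := eqVneq x 0.
    exists [set (exist _ x hx, Ordinal hk)]; split.
    + exists (exist _ x hx), (Ordinal hk); right; left; split => //.
    + by [].
    + by move=> q ->; rewrite /= ax xb.
    + by move=> q ->; left.
  have {xpos}xpos : 0 < x by rewrite lt_neqAle eq_sym xpos x0.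
  have [a0|a0] := ltrP a 0.
  + have zp : 0 <= (0:R) <= 1 by rewrite lexx ler01.
    pose z0 : unitI R := exist _ 0 zp.
    exists ([set (exist _ x hx, Ordinal hk)] `|`
            [set q | val z0 < val q.1 < x]); split.
    * exists (exist _ x hx), (Ordinal hk); right; right; left.
      split => //; split => //; exists z0; split => //.
    * by left.
    * move=> q [->|/andP[q0 qx]]; first by rewrite /= ax xb.
      by apply/andP; split; [exact: lt_trans a0 q0 | exact: lt_trans qx xb].
    * move=> q [->|/andP[q0 qx]]; first by left.
      by right; rewrite /side /=.
  + have a1 : a <= 1 by apply: ltW; exact: lt_le_trans ax x1.
    have zp : 0 <= a <= 1 by rewrite a0 a1.
    pose z0 : unitI R := exist _ a zp.
    exists ([set (exist _ x hx, Ordinal hk)] `|`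
            [set q | val z0 < val q.1 < x]); split.
    * exists (exist _ x hx), (Ordinal hk); right; right; left.
      split => //; split => //; exists z0; split => //.
    * by left.
    * move=> q [->|/andP[q0 qx]]; first by rewrite /= ax xb.
      by apply/andP; split; [exact: q0 | exact: lt_trans qx xb].
    * move=> q [->|/andP[q0 qx]]; first by left.
      by right; rewrite /side /=.
-
  have [xz|xlt] := eqVneq x 1.
    exists [set (exist _ x hx, Ordinal hk)]; split.
    + exists (exist _ x hx), (Ordinal hk); right; right; right; left; split => //.
    + by [].
    + by move=> q ->; rewrite /= ax xb.
    + by move=> q ->; left.
  have {xlt}xlt : x < 1 by rewrite lt_neqAle xlt x1.
  have [b1|b1] := lerP 1 b.
  + have zp : 0 <= (1:R) <= 1 by rewrite lexx ler01.
    pose z1 : unitI R := exist _ 1 zp.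
    exists ([set (exist _ x hx, Ordinal hk)] `|`
            [set q | x < val q.1 < val z1]); split.
    * exists (exist _ x hx), (Ordinal hk); right; right; right; right.
      split => //; split => //; exists z1; split => //.
    * by left.
    * move=> q [->|/andP[q0 qx]]; first by rewrite /= ax xb.
      by apply/andP; split; [exact: lt_trans ax q0 | exact: lt_le_trans qx b1].
    * move=> q [->|/andP[q0 qx]]; first by left.
      by right; rewrite /side /=.
  + have b0 : 0 <= b by apply: ltW; exact: le_lt_trans x0 xb.
    have zp : 0 <= b <= 1 by rewrite b0 (ltW b1).
    pose z1 : unitI R := exist _ b zp.
    exists ([set (exist _ x hx, Ordinal hk)] `|`
            [set q | x < val q.1 < val z1]); split.
    * exists (exist _ x hx), (Ordinal hk); right; right; right; right.
      split => //; split => //; exists z1; split => //.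
    * by left.
    * move=> q [->|/andP[q0 qx]]; first by rewrite /= ax xb.
      by apply/andP; split; [exact: lt_trans ax q0 | exact: qx].
    * move=> q [->|/andP[q0 qx]]; first by left.
      by right; rewrite /side /=.
-
  exists [set (exist _ x hx, Ordinal hk)]; split.
  + exists (exist _ x hx), (Ordinal hk); left; split => //.
  + by [].
  + by move=> q ->; rewrite /= ax xb.
  + by move=> q ->; left.
Qed.

Lemma sideP (R : realType) (n : nat) (p r : splitI R n) : side p r ->
  (val p.2 = 0%N /\ val r.1 < val p.1) \/ (val p.2 = 1%N /\ val p.1 < val r.1).
Proof.
rewrite /side; case: eqP => [h0 ?|_]; first by left.
by case: eqP => [h1 ?|_ //]; right.
Qed.

Lemma unit_bounds (R : realType) (x : unitI R) : -1 < val x < 2.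
Proof.
have /andP[x0 x1] := valP x.
apply/andP; split; first exact: lt_le_trans (ltrN10 R) x0.
by apply: le_lt_trans x1 _; rewrite ltr1n.
Qed.

Lemma basic_open (R : realType) (n : nat) (B : set (splitI R n)) : split_basic B -> open B.
Proof.
move=> hB.
exists [set B]; first by move=> _ ->; exact: (@finI_from1 _ _ (@split_basic R n) id B).
by rewrite bigcup_set1.
Qed.

Lemma haus (R : realType) (n : nat) : hausdorff_space (splitI R n).
Proof.
rewrite open_hausdorff => p q pq.
have [lt|gt|eq] := ltgtP (val p.1) (val q.1).
- pose c := (val p.1 + val q.1) / 2.
  have [pc cq] := midf_lt lt.
  have /andP[pl _] := unit_bounds p.1; have /andP[_ qu] := unit_bounds q.1.
  have hhB1 : -1 < val p.1 < c by rewrite pl pc.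
  have [B1 [b1 p1 s1 _]] := small hhB1.
  have hhB2 : c < val q.1 < 2 by rewrite qu cq.
  have [B2 [b2 q2 s2 _]] := small hhB2.
  exists (B1, B2); first by split; rewrite inE.
  split; [exact: basic_open | exact: basic_open |].
  apply/eqP; apply/seteqP; split => // r [/s1/andP[_ r1] /s2/andP[r2 _]].
  by have := lt_trans r1 r2; rewrite ltxx.
- pose c := (val q.1 + val p.1) / 2.
  have [qc cp] := midf_lt gt.
  have /andP[ql _] := unit_bounds q.1; have /andP[_ pu] := unit_bounds p.1.
  have hhB1 : c < val p.1 < 2 by rewrite pu cp.
  have [B1 [b1 p1 s1 _]] := small hhB1.
  have hhB2 : -1 < val q.1 < c by rewrite ql qc.
  have [B2 [b2 q2 s2 _]] := small hhB2.
  exists (B1, B2); first by split; rewrite inE.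
  split; [exact: basic_open | exact: basic_open |].
  apply/eqP; apply/seteqP; split => // r [/s1/andP[r1 _] /s2/andP[_ r2]].
  by have := lt_trans r1 r2; rewrite ltxx.
- have [B1 [b1 p1 _ s1]] := small (unit_bounds p.1).
  have [B2 [b2 q2 _ s2]] := small (unit_bounds q.1).
  exists (B1, B2); first by split; rewrite inE.
  split; [exact: basic_open | exact: basic_open |].
  apply/eqP; apply/seteqP; split => // r [/s1 h1 /s2 h2].
  have p1q1 : p.1 = q.1 by apply: val_inj.
  have p2q2 : p.2 != q.2.
    apply/negP => /eqP e; move: pq.
    by rewrite [p]surjective_pairing [q]surjective_pairing p1q1 e eqxx.
  case: h1 => [rp|/sideP h1]; case: h2 => [rq|/sideP h2].
  + by move: pq; rewrite -rp -rq eqxx.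
  + by move: h2; rewrite rp eq ltxx; case=> [][].
  + by move: h1; rewrite rq -eq ltxx; case=> [][].
  + move: p2q2; rewrite -(inj_eq val_inj).
    case: h1 => [][e1 h1]; case: h2 => [][e2 h2]; rewrite ?e1 ?e2 //= => _.
    * by move: (lt_trans h2 h1); rewrite eq ltxx.
    * by move: (lt_trans h1 h2); rewrite eq ltxx.
Qed.

Lemma nbhs_sub (R : realType) (n : nat) (p : splitI R n) (F : set_system (splitI R n)) : Filter F ->
  (forall B, split_basic B -> B p -> F B) -> nbhs p `<=` F.
Proof.
move=> FF hB A [B [oB Bp BA]].
apply: (@filterS _ F FF B A BA).
case: oB => D' D'sub DB.
have : (\bigcup_(i in D') i) p by rewrite DB.
move=> -[C CD Cp].
apply: (@filterS _ F FF C B); first by rewrite -DB => x Cx; exists C.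
have [E Esub EC] := D'sub C CD; rewrite -EC; rewrite -EC in Cp.
apply: filter_bigI => i iE; apply: hB; [by have /set_mem := Esub i iE | exact: Cp].
Qed.

Lemma ultra_ord (R : realType) (n : nat) (U : set_system (splitI R n)) :
  UltraFilter U -> forall s : seq 'I_n, U [set q | q.2 \in s] ->
  exists i, U [set q | q.2 = i].
Proof.
move=> UU; elim => [|j s IH] Us.
  by have [q] := filter_ex Us; rewrite /= in_nil.
case: (in_ultra_setVsetC [set q : splitI R n | q.2 = j] UU) => h; first by exists j.
apply: IH; apply: filterS (filterI Us h) => q [] /=.
by rewrite in_cons => /orP[/eqP|//].
Qed.

Lemma comp (R : realType) (n : nat) (hn : (1 < n)%N) : compact [set: splitI R n].
Proof.
rewrite compact_ultra => U UU _.
pose f := fun q : splitI R n => val q.1.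
have GT : (f @ U) `[0, 1]%classic.
  apply: (@filterS _ U _ setT); last exact: filterT.
  move=> q _; rewrite /= in_itv /=; exact: (valP q.1).
have [x [x01 clx]] := @segment_compact R 0 1 (f @ U) _ GT.
have hgt : forall c, c < x -> U [set q | c < f q].
  move=> c cx; pose t := (c + x) / 2; have [ct tx] := midf_lt cx.
  case: (in_ultra_setVsetC [set q | c < f q] UU) => // h; exfalso.
  have h' : (f @ U) [set r | r <= c].
    by apply: (@filterS _ U _ _ _ _ h) => q /= hq; rewrite leNgt; apply/negP.
  have [r [/= rc tr]] := clx _ _ h' (lt_le_nbhsr tx).
  by move: (lt_le_trans ct tr); rewrite ltNge rc.
have hlt : forall c, x < c -> U [set q | f q < c].
  move=> c xc.
  case: (in_ultra_setVsetC [set q | f q < c] UU) => // h; exfalso.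
  have h' : (f @ U) [set r | c <= r].
    by apply: (@filterS _ U _ _ _ _ h) => q /= hq; rewrite leNgt; apply/negP.
  have [r [/= rc tr]] := clx _ _ h' (lt_nbhsl xc).
  by move: (lt_le_trans tr rc); rewrite ltxx.
move: x01; rewrite /= in_itv /= => x01.
pose xI : unitI R := exist _ x x01.
have o0p : (0 < n)%N by exact: ltnW.
pose o0 : 'I_n := Ordinal o0p.
pose o1 : 'I_n := Ordinal hn.
case: (in_ultra_setVsetC [set q | f q < x] UU) => hA.
  have xpos : 0 < x.
    have [q qx] := filter_ex hA; have /andP[q0 _] := valP q.1.
    exact: le_lt_trans q0 qx.
  exists (xI, o0); split => //.
  apply: nbhs_sub => B.
  move=> [y [j [[j2 ->]|[[j0 [y0 ->]]|[[j0 [ypos [z0 [z0y ->]]]]|[[j1 [y1 ->]]|[j1 [ylt [z1 [yz1 ->]]]]]]]]]] Bp.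
  - by case: Bp => _ ej; move: j2; rewrite -ej.
  - by case: Bp => ey _; move: xpos; rewrite -[x]/(val xI) ey y0 ltxx.
  - case: Bp => [[ey _]|/andP[/= z0x xy]].
    + have z0x : val z0 < x by rewrite -[x]/(val xI) ey.
      apply: filterS; last exact: (filterI (hgt _ z0x) hA).
      by move=> q [h1 h2]; right; apply/andP; split => //; rewrite -ey.
    + apply: filterS; last exact: (filterI (hgt _ z0x) hA).
      by move=> q [h1 h2]; right; apply/andP; split => //; exact: lt_trans h2 xy.
  - by case: Bp => _ ej; move: j1; rewrite -ej.
  - case: Bp => [[_ ej]|/andP[/= yx xz1]]; first by move: j1; rewrite -ej.
    apply: filterS; last exact: (filterI (hgt _ yx) hA).
    by move=> q [h1 h2]; right; apply/andP; split => //; exact: lt_trans h2 xz1.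
case: (in_ultra_setVsetC [set q | x < f q] UU) => hB.
  have xlt : x < 1.
    have [q qx] := filter_ex hB; have /andP[_ q1] := valP q.1.
    exact: lt_le_trans qx q1.
  exists (xI, o1); split => //.
  apply: nbhs_sub => B.
  move=> [y [j [[j2 ->]|[[j0 [y0 ->]]|[[j0 [ypos [z0 [z0y ->]]]]|[[j1 [y1 ->]]|[j1 [ylt [z1 [yz1 ->]]]]]]]]]] Bp.
  - by case: Bp => _ ej; move: j2; rewrite -ej.
  - by case: Bp => _ ej; move: j0; rewrite -ej.
  - case: Bp => [[_ ej]|/andP[/= z0x xy]]; first by move: j0; rewrite -ej.
    apply: filterS; last exact: (filterI (hlt _ xy) hB).
    by move=> q [h1 h2]; right; apply/andP; split => //; exact: lt_trans z0x h2.
  - by case: Bp => ey _; move: xlt; rewrite -[x]/(val xI) ey y1 ltxx.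
  - case: Bp => [[ey _]|/andP[/= yx xz1]].
    + have xz1 : x < val z1 by rewrite -[x]/(val xI) ey.
      apply: filterS; last exact: (filterI (hlt _ xz1) hB).
      by move=> q [h1 h2]; right; apply/andP; split => //; rewrite -ey.
    + apply: filterS; last exact: (filterI (hlt _ xz1) hB).
      by move=> q [h1 h2]; right; apply/andP; split => //; exact: lt_trans yx h2.
have [i hi] : exists i, U [set q : splitI R n | q.2 = i].
  apply: (ultra_ord UU (s := enum 'I_n)).
  apply: filterS; last exact: filterT.
  by move=> q _ /=; rewrite mem_enum.
have hp : U [set (xI, i)].
  apply: filterS; last exact: (filterI (filterI hA hB) hi).
  move=> q [[/= h1 h2] h3]; rewrite [q]surjective_pairing h3; congr pair.
  apply: val_inj => /=; apply/eqP; rewrite eq_le !leNgt; apply/andP; split; exact/negP.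
exists (xI, i); split => //.
apply: nbhs_sub => B _ Bp.
by apply: filterS hp => q ->.
Qed.

Theorem mainTheorem4 (R : realType) (n : nat) (hn : (2 <= n)%N) :
  compact [set: splitI R n] /\ hausdorff_space (splitI R n).
Proof. by split; [exact: comp | exact: haus]. Qed.
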